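(* Let $D\geq 2$ be a square-free integer, $K=\mathbb{Q}(\sqrt{D})$ with ring of integers $\mathbb{Z}_K$, and let $p\geq 5$ be a prime not dividing $D$. Let $u_K>1$ be the fundamental unit of $K$ (with respect to the real embedding sending $\sqrt{D}$ to a positive number), and let $u_D$ be the first totally positive power of $u_K$ (so $u_D=u_K^2$ if $u_K$ has norm $-1$, and $u_D=u_K$ otherwise). For $\ell\geq 1$ put $d_\ell(D)=u_D^\ell+u_D^{-\ell}+1$ (a positive integer). Suppose there exists $\ell\geq 1$ with $p\mid d_\ell(D)$, and let $\ell$ be the least such index. If $p^2\mid d_\ell(D)$, then the order of $u_K$ in $(\mathbb{Z}_K/p\mathbb{Z}_K)^\times$ equals the order of $u_K$ in $(\mathbb{Z}_K/p^2\mathbb{Z}_K)^\times$. *)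

(* Defs.v *)
(* the real quadratic field K = Q(sqrt D) is realised inside
   algC (algebraic complex numbers), with sqrt D := sqrtC D > 0 (the real
   embedding sending sqrt D to a positive number). *)
From mathcomp Require Import all_boot all_order all_algebra all_field.
Set Implicit Arguments. Unset Strict Implicit. Unset Printing Implicit Defensive.
Import Order.TTheory GRing.Theory Num.Theory.
Local Open Scope ring_scope.

Definition squarefree (D : nat) : Prop :=
  forall q : nat, prime q -> ~~ (q * q %| D)%N.

Definition qsd (D : nat) (a b : rat) : algC := ratr a + ratr b * sqrtC (D%:R).

Definition inK (D : nat) (x : algC) : Prop := exists a b : rat, x = qsd D a b.

Definition inZK (D : nat) (x : algC) : Prop := inK D x /\ x \in Aint.

Definition unitZK (D : nat) (x : algC) : Prop :=
  inZK D x /\ x != 0 /\ inZK D x^-1.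

Definition fundamental_unit (D : nat) (u : algC) : Prop :=
  unitZK D u /\ 1 < u /\
  forall v, unitZK D v -> exists (s : bool) (n : int), v = (-1) ^+ s * u ^ n.

Definition congZK (D : nat) (m : nat) (x y : algC) : Prop :=
  inZK D ((x - y) / m%:R).

Definition order_mod (D : nat) (m : nat) (u : algC) (n : nat) : Prop :=
  (0 < n)%N /\ congZK D m (u ^+ n) 1 /\
  forall k : nat, (0 < k)%N -> congZK D m (u ^+ k) 1 -> (n <= k)%N.

(* m is the least exponent >= 1 such that u^m is totally positive, where u =
   a + b sqrt D and its Galois conjugate is a - b sqrt D *)
Definition first_totpos_exp (D : nat) (a b : rat) (m : nat) : Prop :=
  let tp k := 0 < qsd D a b ^+ k /\ 0 < qsd D a (- b) ^+ k in
  (0 < m)%N /\ tp m /\ forall k : nat, (0 < k)%N -> tp k -> (m <= k)%N.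

Definition dl (uD : algC) (l : nat) : algC := uD ^+ l + uD ^- l + 1.

(* Main.v *)
Require Import Defs.
From mathcomp Require Import all_boot all_order all_algebra all_field.
From mathcomp Require Import ring.
Import Order.TTheory GRing.Theory Num.Theory.
Local Open Scope ring_scope.

Lemma s2 D : sqrtC (D%:R : algC) * sqrtC D%:R = D%:R.
Proof. by rewrite -expr2 sqrtCK. Qed.

Lemma qsdM D a b c d : qsd D a b * qsd D c d = qsd D (a*c + b*d*D%:R) (a*d + b*c).
Proof.
rewrite /qsd !rmorphD !rmorphM /= rmorph_nat.
have := s2 D; set s := sqrtC _ => hs; rewrite -hs; ring.
Qed.

Lemma qsd1 D : qsd D 1 0 = 1.
Proof. by rewrite /qsd rmorph1 rmorph0 mul0r addr0. Qed.

Lemma qsd_exp D a b k : exists x y,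
  qsd D a b ^+ k = qsd D x y /\ qsd D a (-b) ^+ k = qsd D x (-y).
Proof.
elim: k => [|k [x [y [h1 h2]]]]; first by exists 1, 0; rewrite !expr0 oppr0 qsd1.
exists (a*x + b*y*D%:R), (a*y + b*x); rewrite !exprS h1 h2 !qsdM; split=> //.
by congr qsd; ring.
Qed.

Lemma sqrt_irr D : (2 <= D)%N -> squarefree D -> forall r : rat, ratr r != sqrtC (D%:R : algC).
Proof.
move=> D2 sqD r; apply/eqP => hr.
have Ar : sqrtC (D%:R : algC) \in Aint.
  apply: (@root_monic_Aint ('X^2 - (D%:R : algC)%:P)).
  - by rewrite /root !hornerE sqrtCK subrr.
  - exact: monicXnsubC.
  - by rewrite polyOverXnsubC rpred_nat.
have Zs : sqrtC (D%:R : algC) \in Num.int by rewrite Cint_rat_Aint // -hr Crat_rat.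
have Ns : sqrtC (D%:R : algC) \in Num.nat by rewrite natrEint Zs sqrtC_ge0 ler0n.
case/natrP: Ns => k hk.
have kD : (k * k)%N = D.
  by apply/eqP; rewrite -(eqr_nat algC) natrM -hk s2.
have k2 : (1 < k)%N.
  rewrite ltnNge; apply/negP => k1; move: D2; rewrite -kD.
  by case: k k1 {hk kD} => [|[|]].
have := sqD (pdiv k) (pdiv_prime k2).
by rewrite -kD dvdn_mul // pdiv_dvd.
Qed.

Lemma qsd_rat D x y z : (2 <= D)%N -> squarefree D -> qsd D x y = ratr z -> y = 0.
Proof.
move=> D2 sqD h; apply/eqP; apply: contraT => y0.
have := @sqrt_irr D D2 sqD ((z - x) / y); rewrite fmorph_div rmorphB /= -h /qsd.
rewrite addrC addKr mulrAC divff ?mul1r ?eqxx // fmorph_eq0.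
exact: y0.
Qed.
Set Implicit Arguments. Unset Strict Implicit.
Definition cg (q : nat) (x y : algC) := (x == y %[mod (q%:R : algC)])%A.

Lemma cgE q x y : (0 < q)%N -> cg q x y = ((x - y) / q%:R \in Aint).
Proof. by move=> hq; rewrite /cg /eqAmod unfold_in pnatr_eq0 eqn0Ngt hq. Qed.

Lemma cg_refl q x : cg q x x.
Proof. exact: eqAmod_refl. Qed.

Lemma cg_sym q x y : cg q x y -> cg q y x.
Proof. by rewrite /cg eqAmod_sym. Qed.

Lemma cg_trans q x y z : cg q x y -> cg q y z -> cg q x z.
Proof. exact: eqAmod_trans. Qed.

Lemma cgD q x1 x2 y1 y2 : cg q x1 x2 -> cg q y1 y2 -> cg q (x1 + y1) (x2 + y2).
Proof. exact: eqAmodD. Qed.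

Lemma cgM q x1 x2 y1 y2 : x1 \in Aint -> y2 \in Aint ->
  cg q x1 x2 -> cg q y1 y2 -> cg q (x1 * y1) (x2 * y2).
Proof. by move=> a b; apply: eqAmodM. Qed.

Lemma cgX q x y k : x \in Aint -> y \in Aint -> cg q x y -> cg q (x ^+ k) (y ^+ k).
Proof.
move=> ax ay h; elim: k => [|k IH]; first exact: cg_refl.
by rewrite !exprS; apply: cgM => //; rewrite rpredX.
Qed.

Lemma cg_pow1 q U n k : U \in Aint -> cg q (U ^+ n) 1 -> cg q (U ^+ (n * k)) 1.
Proof.
move=> aU h; rewrite exprM -(expr1n _ k); apply: cgX => //; by rewrite ?rpredX ?rpred1.
Qed.

Lemma cg_ord q U n : U \in Aint -> (0 < n)%N -> cg q (U ^+ n) 1 ->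
  (forall k, (0 < k)%N -> cg q (U ^+ k) 1 -> (n <= k)%N) ->
  forall k, cg q (U ^+ k) 1 -> (n %| k)%N.
Proof.
move=> aU n0 hn hmin k hk.
have e : U ^+ k = U ^+ (n * (k %/ n)) * U ^+ (k %% n).
  by rewrite -exprD mulnC -divn_eq.
have h2 : cg q (U ^+ (k %% n)) 1.
  apply: (cg_trans _ hk); rewrite e -{1}(mul1r (U ^+ (k %% n))).
  apply: cgM; rewrite ?rpred1 ?rpredX //; first exact: cg_sym (@cg_pow1 q U n (k %/ n) aU hn).
  exact: cg_refl.
case: (ltnP 0 (k %% n)) => pos; first by have := hmin _ pos h2; rewrite leqNgt ltn_mod n0.
by rewrite /dvdn -leqn0.
Qed.

Lemma cg_weak p x y : (0 < p)%N -> cg (p * p) x y -> cg p x y.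
Proof.
move=> p0; rewrite !cgE ?muln_gt0 ?p0 // natrM invfM mulrA => h.
have -> : (x - y) / p%:R = (x - y) / p%:R / p%:R * p%:R.
  by rewrite divfK // pnatr_eq0 -lt0n.
by rewrite rpredM // rpred_nat.
Qed.

Lemma cg_pp p x : (0 < p)%N -> x \in Aint -> cg p x 1 -> cg (p * p) (x ^+ p) 1.
Proof.
move=> p0 ax h.
have hS : cg p (\sum_(i < p) x ^+ i) 0.
  apply: (@cg_trans _ _ (\sum_(i < p) 1)).
    elim/big_ind2: _ => [|a b c d|i _]; [exact: cg_refl | exact: cgD | ].
    by rewrite -(expr1n _ i); apply: cgX; rewrite ?rpred1.
  by rewrite sumr_const card_ord; exact: eqAmodm0.
move: h hS; rewrite !cgE ?muln_gt0 ?p0 // subrX1 subr0 natrM invfM mulrACA.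
exact: rpredM.
Qed.

Lemma dvdC_cg q z : (0 < q)%N -> (q%:R %| z)%C -> cg q z 0.
Proof.
move=> q0; rewrite cgE // subr0 unfold_in pnatr_eq0 eqn0Ngt q0 /=; exact: Aint_Cint.
Qed.

Lemma cg_dvdC q z : (0 < q)%N -> z \in Crat -> cg q z 0 -> (q%:R %| z)%C.
Proof.
move=> q0 Qz; rewrite cgE // subr0 => h; rewrite unfold_in pnatr_eq0 eqn0Ngt q0 /=.
by apply: Cint_rat_Aint => //; rewrite rpred_div ?rpred_nat.
Qed.

Lemma cg0_1 q z : cg q z 0 -> cg q (z + 1) 1.
Proof. by move=> h; rewrite -{2}(add0r 1); apply: cgD h (cg_refl _ _). Qed.

Lemma congZK_cg D q x : (0 < q)%N -> congZK D q x 1 -> cg q x 1.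
Proof. by move=> q0 [_ h]; rewrite cgE. Qed.

Lemma cg_congZK D a b q k : (0 < q)%N -> cg q (qsd D a b ^+ k) 1 ->
  congZK D q (qsd D a b ^+ k) 1.
Proof.
move=> q0 h; split; last by rewrite -cgE.
have [x [y [-> _]]] := qsd_exp D a b k.
exists ((x - 1) / q%:R), (y / q%:R).
rewrite /qsd !fmorph_div /= rmorphB /= !rmorph_nat rmorph1.
ring.
Qed.

Theorem proposition3p1 (D p : nat) (a b : rat) (m l : nat) :
  (2 <= D)%N -> squarefree D ->
  prime p -> (5 <= p)%N -> ~~ (p %| D)%N ->
  fundamental_unit D (qsd D a b) ->
  first_totpos_exp D a b m ->
  let uD := qsd D a b ^+ m in
  (0 < l)%N -> (p%:R %| dl uD l)%C ->
  (forall k : nat, (0 < k)%N -> (k < l)%N -> ~ (p%:R %| dl uD k)%C) ->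
  ((p ^ 2)%N%:R %| dl uD l)%C ->
  exists n : nat, order_mod D p (qsd D a b) n /\ order_mod D (p ^ 2) (qsd D a b) n.
Proof.
move=> D2 sqD pp p5 _ [[[_ AU] [U0 [_ AUi]]] [U1 _]] [m0 [[tpm1 tpm2] minm]] uD l0 hdl hmin hdl2.
set U := qsd D a b in AU U0 AUi U1 tpm1 minm uD hdl hmin hdl2 *.
set Ub := qsd D a (-b) in tpm2 minm.
have p0 : (0 < p)%N by rewrite prime_gt0.
have Ub0 : Ub != 0.
  apply/eqP => h0.
  have hb : - b = 0 by apply: (@qsd_rat D a (-b) 0 D2 sqD); rewrite rmorph0 -h0.
  have b0 : b = 0 by rewrite -[b]opprK hb oppr0.
  move: h0 U0; rewrite /Ub /U /qsd hb b0 rmorph0 mul0r => ->; by rewrite eqxx.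
have m2 : (m <= 2)%N.
  apply: minm => //; split.
    by rewrite exprn_gt0 // (lt_trans ltr01 U1).
  have Rr : forall r : rat, (ratr r : algC) \is Num.real.
    by move=> r; apply: Creal_Crat; exact: Crat_rat.
  have hR : (ratr a + ratr (-b) * sqrtC (D%:R : algC) : algC) \is Num.real.
    by rewrite realD ?Rr // realM ?Rr // ger0_real // sqrtC_ge0 ler0n.
  have : 0 < (qsd D a (-b) : algC) ^+ 2 by rewrite real_exprn_even_gt0 ?Ub0 ?orbT.
  by apply.
have Rp : forall k, U ^+ (m * k) \in Aint by move=> k; rewrite rpredX.
have Rpi : forall k, (U ^+ (m * k))^-1 \in Aint by move=> k; rewrite -exprVn rpredX.
have Wk0 : forall k, U ^+ (m * k) != 0 by move=> k; rewrite expf_neq0.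
set Nr := a * a - b * b * D%:R.
have hN : U * Ub = ratr Nr.
  rewrite /U /Ub qsdM.
  have -> : a * (- b) + b * a = 0 by ring.
  rewrite /qsd rmorph0 mul0r addr0; congr ratr; rewrite /Nr; ring.
have hNm : 0 < Nr ^+ m.
  rewrite -(ltr0q algC).
  have -> : (ratr (Nr ^+ m) : algC) = (U * Ub) ^+ m by rewrite hN rmorphXn.
  by rewrite exprMn mulr_gt0.
have Udl : forall k, U ^+ (m * k) * Ub ^+ (m * k) = ratr (Nr ^+ (m * k)).
  by move=> k; rewrite -exprMn hN rmorphXn.
have Qdl : dl uD l \in Crat.
  case/dvdCP: hdl => z /intrP [k ->] ->.
  by rewrite rpredM ?rpred_nat // rpred_int.
have M1 : Nr ^+ (m * l) = 1.
  have [x [y [hx hxb]]] := qsd_exp D a b (m * l).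
  have M0 : ratr (Nr ^+ (m * l)) != 0 :> algC.
    by rewrite -Udl mulf_neq0 // expf_neq0.
  have inv : (U ^+ (m * l))^-1 = Ub ^+ (m * l) / ratr (Nr ^+ (m * l)).
    by rewrite -Udl invfM mulrCA mulfV ?mulr1 // expf_neq0.
  have dlE : dl uD l = qsd D (x + x / Nr ^+ (m * l) + 1) (y - y / Nr ^+ (m * l)).
    rewrite /dl /uD -exprM inv -/U -/Ub hx hxb /qsd.
    rewrite !rmorphD ?rmorphB ?rmorphN ?fmorph_div ?rmorph1.
    ring.
  move: Qdl; rewrite dlE => /CratP [z hz].
  have hy := @qsd_rat D _ _ _ D2 sqD hz.
  have [y0|y0] := eqVneq y 0.
    have e1 : U ^+ (m * l) = ratr x by rewrite hx y0 /qsd rmorph0 mul0r addr0.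
    have Z2 : (U ^+ (m * l))^-1 \in Num.int.
      by apply: Cint_rat_Aint; [rewrite e1 -fmorphV Crat_rat | exact: Rpi].
    have g1 : 1 < U ^+ (m * l) by rewrite exprn_egt1 // muln_eq0 negb_or -!lt0n m0 l0.
    have g0 : 0 < U ^+ (m * l) := lt_trans ltr01 g1.
    have := norm_intr_ge1 Z2 (invr_neq0 (Wk0 l)).
    rewrite ger0_norm; last by rewrite ltW // invr_gt0.
    move=> h.
    have : (U ^+ (m * l))^-1 < 1 by rewrite invf_lt1.
    by move=> h2; have := lt_le_trans h2 h; rewrite ltxx.
  move/eqP: hy; rewrite -{1}(mulr1 y) -mulrBr mulf_eq0 (negbTE y0) /= subr_eq0.
  by rewrite eq_sym invr_eq1 => /eqP.
have Nm1 : Nr ^+ m = 1.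
  by apply/eqP; rewrite -(pexpr_eq1 l0) ?ltW // -exprM M1.
have WW : forall k, (U ^+ (m * k))^-1 = Ub ^+ (m * k).
  move=> k; have := Udl k; rewrite [Nr ^+ _]exprM Nm1 expr1n rmorph1 => e.
  by rewrite -[LHS]mulr1 -e mulKf.
have dkQ : forall k, dl uD k \in Crat.
  move=> k; rewrite /dl /uD -exprM WW.
  have [x [y [hx hxb]]] := qsd_exp D a b (m * k).
  rewrite -/U -/Ub hx hxb.
  suff -> : qsd D x y + qsd D x (- y) + 1 = ratr (x + x + 1) by exact: Crat_rat.
  rewrite /qsd !rmorphD ?rmorphN ?rmorph1; ring.
have dlX : forall k, U ^+ (m * k) * dl uD k = (U ^+ (m * k)) ^+ 2 + U ^+ (m * k) + 1.
  move=> k; rewrite /dl /uD -exprM !mulrDr mulfV // mulr1 expr2; ring.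
have pp0 : (0 < p * p)%N by rewrite muln_gt0 p0.
rewrite -mulnn in hdl2.
set x := U ^+ (m * l).
have h2 : cg (p * p) (x ^+ 2 + x + 1) 0.
  rewrite -dlX -(mulr0 x); apply: cgM; rewrite ?rpred0 //; first exact: cg_refl.
  exact: dvdC_cg.
have h3 : cg (p * p) (U ^+ (m * l * 3)) 1.
  rewrite exprM -/x.
  have -> : x ^+ 3 = (x - 1) * (x ^+ 2 + x + 1) + 1 by ring.
  apply: cg0_1; rewrite -(mulr0 (x - 1)); apply: cgM; rewrite ?rpred0 ?rpredB ?rpred1 //.
    exact: Rp.
  exact: cg_refl.
have E0 : (0 < m * l * 3)%N by rewrite !muln_gt0 m0 l0.
have ex1 : exists k, (0 < k)%N && cg p (U ^+ k) 1.
  by exists (m * l * 3)%N; rewrite E0 /=; exact: cg_weak h3.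
have ex2 : exists k, (0 < k)%N && cg (p * p) (U ^+ k) 1.
  by exists (m * l * 3)%N; rewrite E0 /=.
case: (ex_minnP ex1) => n /andP [n0 hn] nmin.
case: (ex_minnP ex2) => n2 /andP [n20 hn2] n2min.
have nmin' : forall k, (0 < k)%N -> cg p (U ^+ k) 1 -> (n <= k)%N.
  by move=> k k0 hk; apply: nmin; rewrite k0.
have n2min' : forall k, (0 < k)%N -> cg (p * p) (U ^+ k) 1 -> (n2 <= k)%N.
  by move=> k k0 hk; apply: n2min; rewrite k0.
have hnE : (n %| m * l * 3)%N := cg_ord AU n0 hn nmin' (cg_weak p0 h3).
have hn2E : (n2 %| m * l * 3)%N := cg_ord AU n20 hn2 n2min' h3.
have hn2p : (n2 %| n * p)%N.
  apply: (cg_ord AU n20 hn2 n2min'); rewrite exprM; apply: cg_pp => //.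
  exact: rpredX.
set r := ((m * l * 3) %/ n)%N.
have hE : (m * l * 3 = n * r)%N by rewrite [(n * _)%N]mulnC /r divnK.
have cpr : coprime p r.
  rewrite prime_coprime //; apply/negP => pr.
  have pE : (p %| m * l * 3)%N by rewrite hE dvdn_mull.
  have pl : (p %| l)%N.
    move: pE; rewrite !Euclid_dvdM // => /orP [/orP [pm|//]|p3].
      by have := leq_trans p5 (leq_trans (dvdn_leq m0 pm) m2).
    by have := leq_trans p5 (dvdn_leq (isT : (0 < 3)%N) p3).
  set l1 := (l %/ p)%N.
  have hl : l = (l1 * p)%N by rewrite /l1 divnK.
  set r1 := (r %/ p)%N.
  have hr : r = (r1 * p)%N by rewrite /r1 divnK.
  have l10 : (0 < l1)%N by move: l0; rewrite hl muln_gt0 => /andP [].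
  have l1l : (l1 < l)%N by rewrite {1}hl ltn_Pmulr // prime_gt1.
  have hnr : (n * r1 = m * l1 * 3)%N.
    apply/eqP; rewrite -(eqn_pmul2r p0) -mulnA -hr -hE hl mulnA mulnAC //.
  set y := U ^+ (m * l1).
  have Ay : y \in Aint by exact: Rp.
  have hy3 : cg p (y ^+ 3) 1 by rewrite -exprM -hnr; apply: cg_pow1.
  have hxy : x = y ^+ p by rewrite /x /y -exprM hl mulnA.
  have hx2 : cg p (x ^+ 2 + x + 1) 0 := cg_weak p0 h2.
  have hyp : cg p (y ^+ p) (y ^+ (p %% 3)).
    have -> : y ^+ p = (y ^+ 3) ^+ (p %/ 3) * y ^+ (p %% 3).
      by rewrite -exprM -exprD mulnC -divn_eq.
    rewrite -{2}(mul1r (y ^+ (p %% 3))).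
    apply: cgM; rewrite ?rpredX ?rpred1 //; last exact: cg_refl.
    by rewrite -(expr1n _ (p %/ 3)); apply: cgX; rewrite ?rpredX ?rpred1.
  have p3 : (p %% 3 != 0)%N.
    apply/negP => /eqP h0; have : (3 %| p)%N by rewrite /dvdn h0.
    by move/(prime_nt_dvdP pp (isT : 3 != 1)%N) => e; move: p5; rewrite -e.
  have Ax : x \in Aint by exact: Rp.
  have hy : cg p (y ^+ 2 + y + 1) 0.
    have := ltn_mod p 3; move: hyp p3; case: (p %% 3)%N => [|[|[|k]]] //= hyp _ _.
      have hxy1 : cg p y x by rewrite hxy; apply: cg_sym; rewrite -{2}(expr1 y).
      apply: cg_trans hx2; apply: cgD; last exact: cg_refl.
      by apply: cgD => //; apply: cgX.
    have hxy2 : cg p (y ^+ 2) x by rewrite hxy; apply: cg_sym.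
    have hyx : cg p y (x ^+ 2).
      apply: (@cg_trans _ _ (y * y ^+ 3)).
        rewrite -{1}(mulr1 y); apply: cgM => //; rewrite ?rpredX //; first exact: cg_refl.
        exact: cg_sym.
      rewrite -exprS (_ : y ^+ 4 = (y ^+ 2) ^+ 2); last by rewrite -exprM.
      by apply: cgX; rewrite ?rpredX.
    apply: (@cg_trans _ _ (x + x ^+ 2 + 1)); last by rewrite (addrC x).
    apply: cgD; last exact: cg_refl.
    exact: cgD.
  have hdl1 : cg p (dl uD l1) 0.
    rewrite -(mulKf (Wk0 l1) (dl uD l1)) dlX -/y -(mulr0 y^-1).
    apply: cgM; rewrite ?rpred0 //; first exact: Rpi.
    exact: cg_refl.
  exact: (hmin l1 l10 l1l (cg_dvdC p0 (dkQ l1) hdl1)).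
have hn2n : (n2 %| n)%N.
  have : (n2 %| gcdn (n * p) (n * r))%N by rewrite dvdn_gcd hn2p -hE hn2E.
  by rewrite -muln_gcdr (eqP cpr) muln1.
have hnp2 : cg (p * p) (U ^+ n) 1.
  by rewrite -(divnK hn2n) mulnC; apply: cg_pow1.
exists n; split.
  split=> //; split; first exact: cg_congZK.
  by move=> k k0 /(congZK_cg p0) hk; exact: nmin'.
rewrite -mulnn; split=> //; split; first exact: cg_congZK.
by move=> k k0 /(congZK_cg pp0) hk; apply: nmin' k0 (cg_weak p0 hk).
Qed.
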